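(* For all $n\ge1$, $$a_{\{0102,0112,0120\}}(n)=a_{\{0102,0112,0121\}}(n)=a_{\{0112,0120,0121\}}(n)=2^{n-1}+\binom{n}{3}.$$
   Context: An ascent in an integer sequence $s_1\cdots s_m$ is an index $j$ with $s_j<s_{j+1}$; $\mathrm{asc}$ denotes the number of ascents. An ascent sequence is a sequence $x_1\cdots x_n$ of nonnegative integers with $x_1=0$ and $x_i\le 1+\mathrm{asc}(x_1\cdots x_{i-1})$ for all $i\ge2$. The reduction $\mathrm{red}(w)$ of an integer sequence $w$ replaces the $i$-th smallest distinct letter of $w$ by $i-1$; a pattern is a reduced sequence. A sequence $x$ contains a pattern $p=p_1\cdots p_k$ if there are indices $i_1<\cdots<i_k$ with $\mathrm{red}(x_{i_1}\cdots x_{i_k})=p$; otherwise $x$ avoids $p$. For a finite set $P$ of patterns, $a_P(n)$ denotes the number of ascent sequences of length $n$ avoiding every pattern in $P$. *)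

(* Defs.v *)
From mathcomp Require Import all_boot.
Set Implicit Arguments. Unset Strict Implicit. Unset Printing Implicit Defensive.

Fixpoint asc (s : seq nat) : nat :=
  match s with
  | a :: ((b :: _) as t) => (a < b) + asc t
  | _ => 0
  end.

Definition is_ascent_seq (x : seq nat) : bool :=
  (head 1 x == 0) &&
  [forall i : 'I_(size x), (0 < i) ==> (nth 0 x i <= (asc (take i x)).+1)].

Definition red (w : seq nat) : seq nat :=
  map (fun a => index a (sort leq (undup w))) w.

Definition contains (x p : seq nat) : bool :=
  [exists m : (size x).-tuple bool, red (mask m x) == p].

Definition avoids (x p : seq nat) : bool := ~~ contains x p.

(* a_P(n): ascent sequences of length n avoiding every pattern of P.
   Entries of an ascent sequence of length n are < n, so tuples over 'I_n
   enumerate all of them. *)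
Definition a_P (P : seq (seq nat)) (n : nat) : nat :=
  #|[set t : n.-tuple 'I_n |
      is_ascent_seq (map val t) && all (avoids (map val t)) P]|.

(* Main.v *)
Require Import Defs.
From mathcomp Require Import all_boot zify.
Set Implicit Arguments. Unset Strict Implicit. Unset Printing Implicit Defensive.

Definition LL (w : seq nat) := sort leq (undup w).

Lemma LL_mem w x : (x \in LL w) = (x \in w).
Proof. by rewrite /LL mem_sort mem_undup. Qed.

Lemma LL_sorted w : sorted ltn (LL w).
Proof.
rewrite ltn_sorted_uniq_leq sort_uniq undup_uniq /=.
apply: sort_sorted; exact: leq_total.
Qed.

Lemma LL_lt w a b : a \in w -> b \in w ->
  (index a (LL w) < index b (LL w)) = (a < b).
Proof.
rewrite -!(LL_mem w) => ha hb.
have hs := LL_sorted w.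
apply/idP/idP => h.
  by have := sorted_ltn_index ltn_trans hs a b ha hb h.
rewrite ltnNge; apply/negP => h2.
rewrite leq_eqVlt in h2; case/orP: h2 => h2.
  have E := index_inj 0 hb ha (eqP h2).
  by rewrite E ltnn in h.
have := sorted_ltn_index ltn_trans hs b a hb ha h2. lia.
Qed.

Lemma LL_eq w a b : a \in w -> b \in w ->
  (index a (LL w) = index b (LL w)) -> a = b.
Proof. rewrite -!(LL_mem w) => ha hb E; exact: (index_inj 0 ha hb E). Qed.

Lemma red4 a b c d : red [:: a; b; c; d] =
  [:: index a (LL [:: a; b; c; d]); index b (LL [:: a; b; c; d]);
      index c (LL [:: a; b; c; d]); index d (LL [:: a; b; c; d])].
Proof. by []. Qed.

Lemma LL_explicit w l : sorted ltn l -> w =i l -> LL w = l.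
Proof.
move=> hl hw; apply: (irr_sorted_eq ltn_trans ltnn) => //; first exact: LL_sorted.
by move=> x; rewrite LL_mem hw.
Qed.

Ltac dec_eqs := repeat match goal with |- context [?x == ?y :> nat] =>
  first [ rewrite (_ : (x == y) = false); last by lia
        | rewrite (_ : (x == y) = true); last by lia ] end.

Ltac memt := rewrite !inE ?eqxx ?orbT //.

Lemma R0102 a b c d : red [:: a; b; c; d] = [:: 0; 1; 0; 2] <-> (a = c /\ a < b /\ b < d).
Proof.
split.
  rewrite red4 => [[h1 h2 h3 h4]].
  have ma : a \in [:: a; b; c; d] by memt.
  have mb : b \in [:: a; b; c; d] by memt.
  have mc : c \in [:: a; b; c; d] by memt.
  have md : d \in [:: a; b; c; d] by memt.
  split; first by apply: (LL_eq ma mc); rewrite h1 h3.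
  split; first by rewrite -(LL_lt ma mb) h1 h2.
  by rewrite -(LL_lt mb md) h2 h4.
move=> [<- [hab hbd]].
rewrite red4.
have -> : LL [:: a; b; a; d] = [:: a; b; d].
  apply: LL_explicit; first by rewrite /= hab hbd.
  by move=> x; rewrite !inE; lia.
by rewrite /=; dec_eqs.
Qed.

Lemma R0112 a b c d : red [:: a; b; c; d] = [:: 0; 1; 1; 2] <-> (a < b /\ b = c /\ c < d).
Proof.
split.
  rewrite red4 => [[h1 h2 h3 h4]].
  have ma : a \in [:: a; b; c; d] by memt.
  have mb : b \in [:: a; b; c; d] by memt.
  have mc : c \in [:: a; b; c; d] by memt.
  have md : d \in [:: a; b; c; d] by memt.
  split; first by rewrite -(LL_lt ma mb) h1 h2.
  split; first by apply: (LL_eq mb mc); rewrite h2 h3.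
  by rewrite -(LL_lt mc md) h3 h4.
move=> [hab [<- hbd]].
rewrite red4.
have -> : LL [:: a; b; b; d] = [:: a; b; d].
  apply: LL_explicit; first by rewrite /= hab hbd.
  by move=> x; rewrite !inE; lia.
by rewrite /=; dec_eqs.
Qed.

Lemma R0120 a b c d : red [:: a; b; c; d] = [:: 0; 1; 2; 0] <-> (a = d /\ a < b /\ b < c).
Proof.
split.
  rewrite red4 => [[h1 h2 h3 h4]].
  have ma : a \in [:: a; b; c; d] by memt.
  have mb : b \in [:: a; b; c; d] by memt.
  have mc : c \in [:: a; b; c; d] by memt.
  have md : d \in [:: a; b; c; d] by memt.
  split; first by apply: (LL_eq ma md); rewrite h1 h4.
  split; first by rewrite -(LL_lt ma mb) h1 h2.
  by rewrite -(LL_lt mb mc) h2 h3.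
move=> [<- [hab hbd]].
rewrite red4.
have -> : LL [:: a; b; c; a] = [:: a; b; c].
  apply: LL_explicit; first by rewrite /= hab hbd.
  by move=> x; rewrite !inE; lia.
by rewrite /=; dec_eqs.
Qed.

Lemma R0121 a b c d : red [:: a; b; c; d] = [:: 0; 1; 2; 1] <-> (a < b /\ b = d /\ b < c).
Proof.
split.
  rewrite red4 => [[h1 h2 h3 h4]].
  have ma : a \in [:: a; b; c; d] by memt.
  have mb : b \in [:: a; b; c; d] by memt.
  have mc : c \in [:: a; b; c; d] by memt.
  have md : d \in [:: a; b; c; d] by memt.
  split; first by rewrite -(LL_lt ma mb) h1 h2.
  split; first by apply: (LL_eq mb md); rewrite h2 h4.
  by rewrite -(LL_lt mb mc) h2 h3.
move=> [hab [<- hbd]].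
rewrite red4.
have -> : LL [:: a; b; c; b] = [:: a; b; c].
  apply: LL_explicit; first by rewrite /= hab hbd.
  by move=> x; rewrite !inE; lia.
by rewrite /=; dec_eqs.
Qed.

Lemma containsP x p : reflect (exists w, subseq w x /\ red w = p) (contains x p).
Proof.
apply: (iffP existsP) => [[m /eqP H] | [w [/subseqP [m Hm ->] H]]].
  by exists (mask m x); split => //; exact: mask_subseq.
have Hm' : size m == size x by rewrite Hm.
by exists (Tuple Hm'); apply/eqP.
Qed.

Lemma subseq_rcons_inv (w s : seq nat) v : subseq w (rcons s v) ->
  subseq w s \/ exists w', w = rcons w' v /\ subseq w' s.
Proof.
rewrite -subseq_rev rev_rcons; case E: (rev w) => [|a t].
  move=> _; left; have -> : w = [::] by rewrite -(revK w) E.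
  exact: sub0seq.
rewrite /=; case: eqP => [Hav H | _ H].
  right; exists (rev t); split; first by rewrite -(revK w) E rev_cons Hav.
  by rewrite -subseq_rev revK.
by left; rewrite -E subseq_rev in H.
Qed.

Lemma rcons_subseq (w s : seq nat) v : subseq w s -> subseq (rcons w v) (rcons s v).
Proof. by move=> H; rewrite -!cats1; apply: cat_subseq => //; exact: subseq_refl. Qed.

Lemma sub_rcons (w s : seq nat) v : subseq w s -> subseq w (rcons s v).
Proof. by move=> H; apply: subseq_trans H (subseq_rcons _ _). Qed.

Lemma memR (x : nat) s v : x \in rcons s v <-> x \in s \/ x = v.
Proof. by rewrite mem_rcons inE; split; [case/orP => [/eqP|]; auto | case => [->|->]; rewrite ?eqxx ?orbT]. Qed.

Lemma sub2R (x y : nat) s v : subseq [:: x; y] (rcons s v) <-> subseq [:: x; y] s \/ (y = v /\ x \in s).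
Proof.
split.
  case/subseq_rcons_inv => [H|[w' [E H]]]; first by left.
  case: w' E H => [|a [|b t]] //=.
    by case => -> ->; rewrite sub1seq; right.
  by case=> _ _; case: t.
case=> [H|[-> H]]; first exact: sub_rcons.
by apply: (@rcons_subseq [:: x]); rewrite sub1seq.
Qed.

Lemma sub3R (x y z : nat) s v : subseq [:: x; y; z] (rcons s v) <-> subseq [:: x; y; z] s \/ (z = v /\ subseq [:: x; y] s).
Proof.
split.
  case/subseq_rcons_inv => [H|[w' [E H]]]; first by left.
  case: w' E H => [|a [|b [|c t]]] //=.
    by case => -> -> ->; right.
  by case=> _ _ _; case: t.
case=> [H|[-> H]]; first exact: sub_rcons.
exact: (@rcons_subseq [:: x; y]).
Qed.

Lemma s3_12 (x y z : nat) (s : seq nat) : subseq [:: x; y; z] s -> subseq [:: x; y] s.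
Proof. by move=> H; apply: subseq_trans H; exact: (mask_subseq [:: true; true; false] [:: x; y; z]). Qed.
Lemma s3_23 (x y z : nat) (s : seq nat) : subseq [:: x; y; z] s -> subseq [:: y; z] s.
Proof. by move=> H; apply: subseq_trans H; exact: (mask_subseq [:: false; true; true] [:: x; y; z]). Qed.
Lemma s3_13 (x y z : nat) (s : seq nat) : subseq [:: x; y; z] s -> subseq [:: x; z] s.
Proof. by move=> H; apply: subseq_trans H; exact: (mask_subseq [:: true; false; true] [:: x; y; z]). Qed.
Lemma s2_1 (x y : nat) (s : seq nat) : subseq [:: x; y] s -> x \in s.
Proof. by move=> H; apply: (mem_subseq H); rewrite inE eqxx. Qed.
Lemma s2_2 (x y : nat) (s : seq nat) : subseq [:: x; y] s -> y \in s.
Proof. by move=> H; apply: (mem_subseq H); rewrite !inE eqxx orbT. Qed.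

Lemma contains_rcons x v p : size p = 4 ->
  contains (rcons x v) p <->
  contains x p \/ exists a b c, subseq [:: a; b; c] x /\ red [:: a; b; c; v] = p.
Proof.
move=> Hp; split.
  case/containsP => w [Hw Hr].
  case: (subseq_rcons_inv Hw) => [H|[w' [E H]]].
    by left; apply/containsP; exists w.
  right; have : size w = 4 by rewrite -Hp -Hr /red size_map.
  rewrite E size_rcons; case: w' E H => [|a [|b [|c [|d t]]]] //= E H _.
  by exists a, b, c; rewrite -E.
case=> [/containsP [w [Hw Hr]]|[a [b [c [H1 H2]]]]]; apply/containsP.
  by exists w; split => //; apply: sub_rcons.
by exists [:: a; b; c; v]; split => //; apply: (@rcons_subseq [:: a; b; c]).
Qed.

Lemma asc_rcons s v : s != [::] -> asc (rcons s v) = asc s + (last 0 s < v).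
Proof.
case: s => // a t _.
elim: t a => [|b t IH] a; first by rewrite /= addn0.
have -> : rcons [:: a, b & t] v = a :: rcons (b :: t) v by [].
have -> : asc (a :: rcons (b :: t) v) = (a < b) + asc (rcons (b :: t) v) by [].
rewrite IH addnA; by [].
Qed.

Lemma forall_ordE n (P : nat -> bool) : [forall i : 'I_n, P i] = all P (iota 0 n).
Proof.
apply/forallP/allP => [H i | H i].
  by rewrite mem_iota add0n => /andP [_ hi]; apply: (H (Ordinal hi)).
by apply: H; rewrite mem_iota add0n ltn_ord.
Qed.

Lemma is_asc_rcons s v : s != [::] ->
  is_ascent_seq (rcons s v) = is_ascent_seq s && (v <= (asc s).+1).
Proof.
move=> hs; rewrite /is_ascent_seq.
have -> : head 1 (rcons s v) = head 1 s by case: s hs.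
rewrite (forall_ordE (size (rcons s v)) (fun i => (0 < i) ==> (nth 0 (rcons s v) i <= (asc (take i (rcons s v))).+1))).
rewrite (forall_ordE (size s) (fun i => (0 < i) ==> (nth 0 s i <= (asc (take i s)).+1))).
have -> : iota 0 (size (rcons s v)) = rcons (iota 0 (size s)) (size s)
  by rewrite size_rcons -addn1 iotaD cats1.
rewrite all_rcons /=.
rewrite nth_rcons ltnn eqxx -cats1 take_size_cat //.
rewrite (_ : 0 < size s) /=; last by case: s hs.
set A := all _ (iota 0 (size s)); set B := all _ (iota 0 (size s)).
have -> : A = B.
  apply: eq_in_all => i; rewrite mem_iota add0n => /andP [_ hi].
  by rewrite nth_cat hi takel_cat // ltnW.
by case: (_ == 0); case: (_ <= _); case: B.
Qed.

Lemma is_asc_nil : is_ascent_seq [::] = false.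
Proof. by []. Qed.

Definition valid (P : seq (seq nat)) s := is_ascent_seq s && all (avoids s) P.

Lemma valid_nonnil P s : valid P s -> s != [::].
Proof. by case: s. Qed.

Lemma valid_rcons P s v : all (fun p => size p == 4) P -> s != [::] ->
  valid P (rcons s v) <-> valid P s /\ v <= (asc s).+1 /\
    (forall p, p \in P -> ~ exists a b c, subseq [:: a; b; c] s /\ red [:: a; b; c; v] = p).
Proof.
move=> HP hs; rewrite /valid is_asc_rcons //.
split.
  case/andP => /andP [h1 h2] /allP h3.
  split; first by rewrite h1 /=; apply/allP => p hp; have := h3 p hp;
    rewrite /avoids => /negP hn; apply/negP => hc; apply: hn;
    apply/(contains_rcons _ _ (eqP (allP HP p hp))); left.
  split => // p hp [a [b [c hc]]].
  have := h3 p hp; rewrite /avoids => /negP; apply.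
  by apply/(contains_rcons _ _ (eqP (allP HP p hp))); right; exists a, b, c.
case=> /andP [h1 /allP h2] [h3 h4].
rewrite h1 h3 /=; apply/allP => p hp; rewrite /avoids; apply/negP.
move/(contains_rcons _ _ (eqP (allP HP p hp))) => [hc|hc].
  by have := h2 p hp; rewrite /avoids hc.
exact: (h4 p hp hc).
Qed.

Lemma asc_le s : asc s <= (size s).-1.
Proof.
elim: s => [|a [|b t] IH] //=.
move: IH => /= IH.
by apply: leq_trans (leq_add (leq_b1 (a < b)) IH) _.
Qed.

Lemma asc_bound s : is_ascent_seq s -> forall x, x \in s -> x < size s.
Proof.
elim/last_ind: s => [|s v IH] //.
case E: (s == [::]).
  rewrite (eqP E) /is_ascent_seq /= => /andP [/eqP -> _] x; by rewrite inE => /eqP ->.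
rewrite is_asc_rcons ?E // => /andP [h1 h2] x /memR [hx|->]; rewrite size_rcons.
  exact: ltn_trans (IH h1 x hx) (ltnSn _).
have : 0 < size s by case: (s) E.
have := asc_le s; move: h2; lia.
Qed.

Lemma avoid_short P : all (fun p => size p == 4) P -> all (avoids [:: 0]) P.
Proof.
move=> /allP HP; apply/allP => p hp; apply/negP => /containsP [w [hw hr]].
have := size_subseq hw; have := eqP (HP p hp); rewrite -hr /red size_map => ->; by [].
Qed.

Lemma valid0 P : all (fun p => size p == 4) P -> valid P [:: 0].
Proof.
move=> HP; rewrite /valid avoid_short // andbT /is_ascent_seq /=.
by apply/forallP => i; case: i => [[|i] hi].
Qed.

Section Gen.
Variable P : seq (seq nat).
Variable succ : nat * nat -> seq (nat * (nat * nat)).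
Variable Inv : seq nat -> nat * nat -> Prop.
Hypothesis HP : all (fun p => size p == 4) P.
Hypothesis H0 : Inv [:: 0] (0, 0).
Hypothesis H1 : forall s st, Inv s st -> valid P s -> forall v,
  valid P (rcons s v) <-> v \in map fst (succ st).
Hypothesis H2 : forall s st, Inv s st -> valid P s -> forall q, q \in succ st ->
  Inv (rcons s q.1) q.2.
Hypothesis H3 : forall s st, Inv s st -> valid P s -> uniq (map fst (succ st)).

Fixpoint gen n := match n with
  | 0 => [:: ([:: 0], (0, 0))]
  | m.+1 => flatten [seq [seq (rcons p.1 q.1, q.2) | q <- succ p.2] | p <- gen m]
  end.

Lemma uniq_flat (l : seq (seq nat * (nat * nat))) :
  uniq (map fst l) -> (forall p, p \in l -> uniq (map fst (succ p.2))) ->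
  uniq (flatten [seq [seq rcons p.1 q.1 | q <- succ p.2] | p <- l]).
Proof.
elim: l => [|p l IH] //= /andP [hn hu] hs.
rewrite cat_uniq IH ?andbT //; last by move=> p' hp'; apply: hs; rewrite inE hp' orbT.
apply/andP; split.
  have -> : [seq rcons p.1 q.1 | q <- succ p.2] = map (rcons p.1) (map fst (succ p.2)).
    by rewrite -map_comp.
  by rewrite map_inj_uniq ?hs ?inE ?eqxx //; apply: rcons_injr.
apply/hasP => [[y /flatten_mapP [p' hp' /mapP [q' _ ->]] /mapP [q _ E]]].
case: (rcons_inj E) => E1 _.
by move: hn; rewrite -E1; case/negP; apply/mapP; exists p'.
Qed.

Lemma gen_ok n :
  (forall p, p \in gen n -> Inv p.1 p.2 /\ valid P p.1 /\ size p.1 = n.+1) /\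
  uniq (map fst (gen n)) /\
  (forall s, valid P s -> size s = n.+1 -> s \in map fst (gen n)).
Proof.
elim: n => [|n [IH1 [IH2 IH3]]].
  split; first by move=> p; rewrite inE => /eqP ->; split => //; split => //; apply: valid0.
  split => // s; case: s => [|a [|b t]] // hv _.
  move: hv => /andP [/andP [/eqP ha _] _]; by rewrite /= in ha; rewrite ha inE.
have mem : forall p, p \in gen n.+1 -> exists2 p0, p0 \in gen n &
    exists2 q, q \in succ p0.2 & p = (rcons p0.1 q.1, q.2).
  move=> p /flatten_mapP [p0 hp0 /mapP [q hq ->]]; exists p0 => //; by exists q.
have P1 : forall p, p \in gen n.+1 -> Inv p.1 p.2 /\ valid P p.1 /\ size p.1 = n.+2.
  move=> p /mem [p0 hp0 [q hq ->]] /=.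
  have [i0 [v0 s0]] := IH1 p0 hp0.
  split; first exact: (H2 i0 v0 hq).
  split; last by rewrite size_rcons s0.
  by apply/(H1 i0 v0); apply/mapP; exists q.
split => //; split.
  rewrite /= map_flatten -map_comp.
  rewrite (eq_map (_ : _ =1 fun p => [seq rcons p.1 q.1 | q <- succ p.2])); last first.
    by move=> p /=; rewrite -map_comp.
  apply: uniq_flat => // p hp; have [i0 [v0 _]] := IH1 p hp; exact: (H3 i0 v0).
move=> s; elim/last_ind: s => [|s v _] // hv; rewrite size_rcons => [[hs]].
have sne : s != [::] by rewrite -size_eq0 hs.
have [vs [hv1 hv2]] := (valid_rcons v HP sne).1 hv.
have /mapP [p0 hp0 E] := IH3 s vs hs.
have [i0 [v0 _]] := IH1 p0 hp0.
have : v \in map fst (succ p0.2) by apply/(H1 i0 v0); rewrite -E.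
move=> /mapP [q hq Ev].
apply/mapP; exists (rcons p0.1 q.1, q.2) => /=; last by rewrite E Ev.
apply/flatten_mapP; exists p0 => //; apply/mapP; by exists q.
Qed.

Lemma card_gen n : a_P P n.+1 = size (gen n).
Proof.
have [G1 [G2 G3]] := gen_ok n.
rewrite /a_P cardE.
set E := enum _.
rewrite -(size_map (fun t : n.+1.-tuple 'I_n.+1 => map val (val t))) -(size_map fst).
apply: perm_size; apply: uniq_perm => //.
  rewrite map_inj_uniq ?enum_uniq // => t1 t2 /= h.
  by apply: val_inj; apply: (inj_map val_inj).
move=> s; apply/mapP/idP.
  move=> [t]; rewrite mem_enum inE => ht ->.
  by apply: G3 => //; rewrite size_map size_tuple.
move=> /mapP [p hp Es].
have [_ [hv hsz]] := G1 p hp.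
rewrite -Es in hv hsz.
have hb := asc_bound (andP hv).1.
have Hs : size (map (@inord n) s) == n.+1 by rewrite size_map hsz.
have Em : map val (map (@inord n) s) = s.
  rewrite -map_comp map_id_in // => x hx /=; rewrite inordK //; rewrite -hsz; exact: hb.
exists (Tuple Hs); last by rewrite /= Em.
by rewrite mem_enum inE /= Em.
Qed.

Lemma gen_tags n :
  (forall s t k, Inv s (t, k) -> t <= 5) ->
  all (fun p => p.2.1 <= 5) (gen n).
Proof.
move=> HT; apply/allP => p hp.
have [G1 _] := gen_ok n.
have [hI _] := G1 p hp; case: p hp hI => s [t k] _ /=; exact: HT.
Qed.

End Gen.

Lemma last_in (s : seq nat) : s != [::] -> last 0 s \in s.
Proof. by case: s => // a t _; rewrite /= mem_last. Qed.

Lemma zero_in P s : valid P s -> 0 \in s.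
Proof. by case: s => // a t /andP [/andP [/eqP /= -> _] _]; rewrite inE eqxx. Qed.

Lemma rep_of (s : seq nat) (Q : nat -> Prop) x z :
  (forall y, subseq [:: y; y] s -> Q y) -> subseq [:: x; z] s -> x = z -> Q x.
Proof. by move=> H hs E; apply: H; rewrite {2}E. Qed.

Definition P1 := [:: [:: 0; 1; 0; 2]; [:: 0; 1; 1; 2]; [:: 0; 1; 2; 0]].
Definition P2 := [:: [:: 0; 1; 0; 2]; [:: 0; 1; 1; 2]; [:: 0; 1; 2; 1]].
Definition P3 := [:: [:: 0; 1; 1; 2]; [:: 0; 1; 2; 0]; [:: 0; 1; 2; 1]].

Definition rel0102 (a b c d : nat) := a = c /\ a < b /\ b < d.
Definition rel0112 (a b c d : nat) := a < b /\ b = c /\ c < d.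
Definition rel0120 (a b c d : nat) := a = d /\ a < b /\ b < c.
Definition rel0121 (a b c d : nat) := a < b /\ b = d /\ b < c.

Lemma valid3_rcons (p1 p2 p3 : seq nat) (r1 r2 r3 : nat -> nat -> nat -> nat -> Prop) s v :
  (forall a b c d, red [:: a; b; c; d] = p1 <-> r1 a b c d) ->
  (forall a b c d, red [:: a; b; c; d] = p2 <-> r2 a b c d) ->
  (forall a b c d, red [:: a; b; c; d] = p3 <-> r3 a b c d) ->
  size p1 = 4 -> size p2 = 4 -> size p3 = 4 ->
  valid [:: p1; p2; p3] s ->
  (valid [:: p1; p2; p3] (rcons s v) <-> v <= (asc s).+1 /\
    forall a b c, subseq [:: a; b; c] s -> ~ r1 a b c v /\ ~ r2 a b c v /\ ~ r3 a b c v).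
Proof.
move=> R1 R2 R3 s1 s2 s3 hv.
have HP : all (fun p => size p == 4) [:: p1; p2; p3] by rewrite /= s1 s2 s3.
rewrite valid_rcons //; last exact: valid_nonnil hv.
split.
  move=> [_ [hv' hn]]; split => // a b c hs.
  split; first by move=> h; apply: (hn p1); [rewrite inE eqxx | exists a, b, c; split => //; apply/R1].
  split; first by move=> h; apply: (hn p2); [rewrite !inE eqxx orbT | exists a, b, c; split => //; apply/R2].
  by move=> h; apply: (hn p3); [rewrite !inE eqxx !orbT | exists a, b, c; split => //; apply/R3].
move=> [hv' hn]; split => //; split => // p; rewrite !inE => /or3P [/eqP->|/eqP->|/eqP->] [a [b [c [hs hr]]]]; have := hn a b c hs.
- by move: hr => /R1; tauto.
- by move: hr => /R2; tauto.
- by move: hr => /R3; tauto.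
Qed.

Lemma valid1_rcons s v : valid P1 s ->
  (valid P1 (rcons s v) <-> v <= (asc s).+1 /\
    forall a b c, subseq [:: a; b; c] s -> ~ rel0102 a b c v /\ ~ rel0112 a b c v /\ ~ rel0120 a b c v).
Proof. by apply: valid3_rcons => //; [exact: R0102 | exact: R0112 | exact: R0120]. Qed.
Lemma valid2_rcons s v : valid P2 s ->
  (valid P2 (rcons s v) <-> v <= (asc s).+1 /\
    forall a b c, subseq [:: a; b; c] s -> ~ rel0102 a b c v /\ ~ rel0112 a b c v /\ ~ rel0121 a b c v).
Proof. by apply: valid3_rcons => //; [exact: R0102 | exact: R0112 | exact: R0121]. Qed.
Lemma valid3_rcons' s v : valid P3 s ->
  (valid P3 (rcons s v) <-> v <= (asc s).+1 /\
    forall a b c, subseq [:: a; b; c] s -> ~ rel0112 a b c v /\ ~ rel0120 a b c v /\ ~ rel0121 a b c v).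
Proof. by apply: valid3_rcons => //; [exact: R0112 | exact: R0120 | exact: R0121]. Qed.

Definition allle (s : seq nat) k := forall x, x \in s -> x <= k.
Definition sorted2 (s : seq nat) := forall x y, subseq [:: x; y] s -> x <= y.
Definition I1 (s : seq nat) k := forall u, u < k -> subseq [:: u; k] s.
Definition I2 (s : seq nat) k := forall u, u < k.-1 -> subseq [:: u; k.-1; k] s.

Ltac pre hs :=
  have h12 := s3_12 hs; have h23 := s3_23 hs; have h13 := s3_13 hs;
  have ma := s2_1 h12; have mb := s2_2 h12; have mc := s2_2 h23.
Ltac alls H := have := H _ ma; have := H _ mb; have := H _ mc.
Ltac pairs H := have := H _ _ h12; have := H _ _ h23; have := H _ _ h13.
Ltac unrel := rewrite /rel0102 /rel0112 /rel0120 /rel0121.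

Definition Inv1 (s : seq nat) (st : nat * nat) : Prop :=
 let: (t, k) := st in
 match t with
 | 0 => allle s 0 /\ asc s = 0 /\ last 0 s = 0
 | 1 => allle s 1 /\ sorted2 s /\ (forall y, subseq [:: y; y] s -> y = 0) /\
        subseq [:: 0; 1] s /\ asc s = 1 /\ last 0 s = 1
 | 2 => allle s 1 /\ (subseq [:: 0; 1; 0] s \/ subseq [:: 0; 1; 1] s)
 | 3 => 2 <= k /\ allle s k /\ sorted2 s /\ (forall y, subseq [:: y; y] s -> y = 0) /\
        I1 s k /\ I2 s k /\ asc s = k /\ last 0 s = k
 | 4 => 2 <= k /\ allle s k /\ sorted2 s /\ (forall y, subseq [:: y; y] s -> y = 0 \/ y = k) /\
        I2 s k /\ subseq [:: 0; k; k] s /\ asc s = k /\ last 0 s = k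
 | 5 => 2 <= k /\ allle s k /\ (forall y z, subseq [:: y; z] s -> z < y -> y = k /\ z = k.-1) /\
        (forall y, subseq [:: y; y] s -> y = 0 \/ y = k.-1 \/ y = k) /\
        I2 s k /\ subseq [:: 0; k.-1; k.-1] s /\ asc s = k /\ last 0 s = k.-1
 | _ => False
 end.

Definition succ1 (st : nat * nat) : seq (nat * (nat * nat)) :=
 let: (t, k) := st in
 match t with
 | 0 => [:: (0, (0, 0)); (1, (1, 1))]
 | 1 => [:: (0, (2, 0)); (1, (2, 0)); (2, (3, 2))]
 | 2 => [:: (0, (2, 0)); (1, (2, 0))]
 | 3 => [:: (k.-1, (5, k)); (k, (4, k)); (k.+1, (3, k.+1))]
 | 4 => [:: (k.-1, (5, k)); (k, (4, k))]
 | 5 => [:: (k.-1, (5, k))]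
 | _ => [::]
 end.

Lemma H1_1 s st : Inv1 s st -> valid P1 s -> forall v,
  valid P1 (rcons s v) <-> v \in map fst (succ1 st).
Proof.
case: st => t k hI hv v; rewrite valid1_rcons //; rewrite /= in hI *.
case: t hI => [|[|[|[|[|[|t]]]]]] //=.
- move=> [hall [hasc hl]]; rewrite !inE; split; first lia.
  move=> hv'; split; first lia.
  move=> a b c hs; pre hs; alls hall; unrel; lia.
- move=> [hall [hsort [hrep [h01 [hasc hl]]]]]; rewrite !inE; split; first lia.
  move=> hv'; split; first lia.
  move=> a b c hs; pre hs; alls hall; pairs hsort; have := rep_of hrep h23; unrel; lia.
- move=> [hall hw]; rewrite !inE; split.
    by move=> [_ hn]; case: hw => hw; have := hn _ _ _ hw; unrel; lia.
  move=> hv'; split; first lia.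
  move=> a b c hs; pre hs; alls hall; unrel; lia.
- move=> [hk [hall [hsort [hrep [hI1 [hI2 [hasc hl]]]]]]]; rewrite !inE; split.
    move=> [hv' hn]; case: (ltnP v k.-1) => hvk; last lia.
    by have := hn _ _ _ (hI2 v hvk); unrel; lia.
  move=> hv'; split; first lia.
  move=> a b c hs; pre hs; alls hall; pairs hsort; have := rep_of hrep h23; unrel; lia.
- move=> [hk [hall [hsort [hrep [hI2 [hw [hasc hl]]]]]]]; rewrite !inE; split.
    move=> [hv' hn]; have := hn _ _ _ hw; case: (ltnP v k.-1) => hvk.
      by have := hn _ _ _ (hI2 v hvk); unrel; lia.
    unrel; lia.
  move=> hv'; split; first lia.
  move=> a b c hs; pre hs; alls hall; pairs hsort; have := rep_of hrep h23; unrel; lia.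
- move=> [hk [hall [hdesc [hrep [hI2 [hw [hasc hl]]]]]]]; rewrite !inE; split.
    move=> [hv' hn]; have := hn _ _ _ hw; case: (ltnP v k.-1) => hvk.
      by have := hn _ _ _ (hI2 v hvk); unrel; lia.
    unrel; lia.
  move=> hv'; split; first lia.
  move=> a b c hs; pre hs; alls hall; pairs hdesc; have := rep_of hrep h23; unrel; lia.
Qed.

Ltac allR hall := move=> x /memR [hx|->]; [have := hall x hx; lia | lia].
Ltac ascR sne := rewrite asc_rcons //; lia.

Lemma H2_1 s st : Inv1 s st -> valid P1 s -> forall q, q \in succ1 st ->
  Inv1 (rcons s q.1) q.2.
Proof.
case: st => t k hI hv q; have sne := valid_nonnil hv; have z0 := zero_in hv.
case: t hI => [|[|[|[|[|[|t]]]]]] //=.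
- move=> [hall [hasc hl]]; rewrite !inE => /orP [/eqP -> | /eqP ->] /=.
    split; first by allR hall.
    by rewrite last_rcons; split => //; ascR sne.
  split; first by allR hall.
  split; first by move=> x y /sub2R [h|[-> hx]]; [have := hall x (s2_1 h); have := hall y (s2_2 h) | have := hall x hx]; lia.
  split; first by move=> y /sub2R [h|[E hy]]; [have := hall y (s2_1 h) | have := hall y hy]; lia.
  split; first by apply/sub2R; right.
  by rewrite last_rcons; split => //; ascR sne.
- move=> [hall [hsort [hrep [h01 [hasc hl]]]]]; rewrite !inE => /or3P [/eqP -> | /eqP -> | /eqP ->] /=.
  + split; first by allR hall.
    by left; apply/sub3R; right.
  + split; first by allR hall.
    by right; apply/sub3R; right.
  + split => //; split; first by allR hall.
    split; first by move=> x y /sub2R [h|[-> hx]]; [apply: hsort | have := hall x hx; lia].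
    split; first by move=> y /sub2R [h|[E hy]]; [apply: hrep | have := hall y hy; lia].
    split. { move=> u hu; apply/sub2R; right; split => //.
      have [->|->] : u = 0 \/ u = 1 by lia. exact: s2_1 h01. exact: s2_2 h01. }
    split; first by move=> u hu; apply/sub3R; right; split => //; rewrite (_ : u = 0) //; lia.
    by rewrite last_rcons; split => //; ascR sne.
- move=> [hall hw]; rewrite !inE => /orP [/eqP -> | /eqP ->] /=.
  + split; first by allR hall.
    by case: hw => hw; [left|right]; apply: sub_rcons.
  + split; first by allR hall.
    by case: hw => hw; [left|right]; apply: sub_rcons.
- move=> [hk [hall [hsort [hrep [hI1 [hI2 [hasc hl]]]]]]].
  have kin : k \in s by rewrite -hl; apply: last_in.
  rewrite !inE => /or3P [/eqP -> | /eqP -> | /eqP ->] /=.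
  + split => //; split; first by allR hall.
    split; first by move=> y z /sub2R [h|[-> hy]] hzy; [have := hsort _ _ h; lia | have := hall y hy; lia].
    split; first by move=> y /sub2R [h|[E hy]]; [have := hrep y h; lia | lia].
    split; first by move=> u hu; apply: sub_rcons; apply: hI2.
    split; first by apply/sub3R; right; split => //; apply: (@s3_12 _ _ k); apply: hI2; lia.
    by rewrite last_rcons; split => //; ascR sne.
  + split => //; split; first by allR hall.
    split; first by move=> x y /sub2R [h|[-> hx]]; [apply: hsort | have := hall x hx; lia].
    split; first by move=> y /sub2R [h|[E hy]]; [left; apply: hrep | right].
    split; first by move=> u hu; apply: sub_rcons; apply: hI2.
    split; first by apply/sub3R; right; split => //; apply: hI1; lia.
    by rewrite last_rcons; split => //; ascR sne.
  + split; first lia.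
    split; first by allR hall.
    split; first by move=> x y /sub2R [h|[-> hx]]; [apply: hsort | have := hall x hx; lia].
    split; first by move=> y /sub2R [h|[E hy]]; [apply: hrep | have := hall y hy; lia].
    split; first by move=> u hu; apply/sub2R; right; split => //;
      case: (ltnP u k) => huk; [exact: s2_1 (hI1 u huk) | rewrite (_ : u = k) //; lia].
    split; first by move=> u hu; apply/sub3R; right; split => //; apply: hI1; lia.
    by rewrite last_rcons; split => //; ascR sne.
- move=> [hk [hall [hsort [hrep [hI2 [hw [hasc hl]]]]]]].
  rewrite !inE => /orP [/eqP -> | /eqP ->] /=.
  + split => //; split; first by allR hall.
    split; first by move=> y z /sub2R [h|[-> hy]] hzy; [have := hsort _ _ h; lia | have := hall y hy; lia].
    split; first by move=> y /sub2R [h|[E hy]]; [have := hrep y h; lia | lia].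
    split; first by move=> u hu; apply: sub_rcons; apply: hI2.
    split; first by apply/sub3R; right; split => //; apply: (@s3_12 _ _ k); apply: hI2; lia.
    by rewrite last_rcons; split => //; ascR sne.
  + split => //; split; first by allR hall.
    split; first by move=> x y /sub2R [h|[-> hx]]; [apply: hsort | have := hall x hx; lia].
    split; first by move=> y /sub2R [h|[E hy]]; [apply: hrep | right].
    split; first by move=> u hu; apply: sub_rcons; apply: hI2.
    split; first by apply: sub_rcons.
    by rewrite last_rcons; split => //; ascR sne.
- move=> [hk [hall [hdesc [hrep [hI2 [hw [hasc hl]]]]]]].
  rewrite !inE => /eqP -> /=.
  split => //; split; first by allR hall.
  split; first by move=> y z /sub2R [h|[-> hy]] hzy; [apply: hdesc | have := hall y hy; lia].
  split; first by move=> y /sub2R [h|[E hy]]; [apply: hrep | lia].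
  split; first by move=> u hu; apply: sub_rcons; apply: hI2.
  split; first by apply: sub_rcons.
  by rewrite last_rcons; split => //; ascR sne.
Qed.

Lemma H3_1 s st : Inv1 s st -> valid P1 s -> uniq (map fst (succ1 st)).
Proof.
case: st => t k hI _; case: t hI => [|[|[|[|[|[|t]]]]]] //= hI; rewrite ?inE //; lia.
Qed.

Definition cnt u (l : seq (seq nat * (nat * nat))) := count (fun p => p.2.1 == u) l.

Lemma cnt_step succ n u (F : nat -> nat) :
  (forall st, count (fun q => q.2.1 == u) (succ st) = F st.1) ->
  cnt u (gen succ n.+1) = sumn [seq F p.2.1 | p <- gen succ n].
Proof.
move=> HF; rewrite /cnt /= count_flatten -map_comp; congr sumn; apply: eq_map => p /=.
by rewrite count_map -HF.
Qed.

Lemma sumn_add (T : Type) (f g : T -> nat) l :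
  sumn [seq f x + g x | x <- l] = sumn (map f l) + sumn (map g l).
Proof. by elim: l => //= x l ->; rewrite addnACA. Qed.

Lemma sumn_cnt u (l : seq (seq nat * (nat * nat))) :
  sumn [seq nat_of_bool (p.2.1 == u) | p <- l] = cnt u l.
Proof. by rewrite sumn_count. Qed.

Lemma size6 (l : seq (seq nat * (nat * nat))) : all (fun p => p.2.1 <= 5) l ->
  size l = cnt 0 l + cnt 1 l + cnt 2 l + cnt 3 l + cnt 4 l + cnt 5 l.
Proof.
rewrite /cnt; elim: l => //= p l IH /andP [hp hl]; rewrite IH //.
case: p hp => s [[|[|[|[|[|[|t]]]]]] k] //= _; lia.
Qed.



Lemma H0_1 : Inv1 [:: 0] (0, 0).
Proof. by split => // x; rewrite inE => /eqP ->. Qed.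

Lemma HP1 : all (fun p => size p == 4) P1. Proof. by []. Qed.

Lemma T1 s t k : Inv1 s (t, k) -> t <= 5.
Proof. by case: t => [|[|[|[|[|[|t]]]]]]. Qed.

Lemma counts1 m :
  cnt 0 (gen succ1 m.+1) = 1 /\ cnt 1 (gen succ1 m.+1) = 1 /\
  cnt 2 (gen succ1 m.+1) + 2 = 2 ^ m.+1 /\ cnt 3 (gen succ1 m.+1) = m /\
  cnt 4 (gen succ1 m.+1) = 'C(m, 2) /\ cnt 5 (gen succ1 m.+1) = 'C(m.+1, 3).
Proof.
elim: m => [|m IH]; first by [].
move: IH => [h0 [h1 [h2 [h3 [h4 h5]]]]].
rewrite (@cnt_step succ1 m.+1 0 (fun t => t == 0)); last by case => [[|[|[|[|[|[|t]]]]]] k].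
rewrite (@cnt_step succ1 m.+1 1 (fun t => t == 0)); last by case => [[|[|[|[|[|[|t]]]]]] k].
rewrite (@cnt_step succ1 m.+1 2 (fun t => (t == 1) + (t == 1) + (t == 2) + (t == 2)));
  last by case => [[|[|[|[|[|[|t]]]]]] k].
rewrite (@cnt_step succ1 m.+1 3 (fun t => (t == 1) + (t == 3)));
  last by case => [[|[|[|[|[|[|t]]]]]] k].
rewrite (@cnt_step succ1 m.+1 4 (fun t => (t == 3) + (t == 4)));
  last by case => [[|[|[|[|[|[|t]]]]]] k].
rewrite (@cnt_step succ1 m.+1 5 (fun t => (t == 3) + (t == 4) + (t == 5)));
  last by case => [[|[|[|[|[|[|t]]]]]] k].
rewrite !sumn_add !sumn_cnt h0 h1 h3 h4 h5.
rewrite !binS ?bin1 ?bin0 expnS.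
lia.
Qed.

Lemma part1 n : 1 <= n -> a_P P1 n = 2 ^ n.-1 + 'C(n, 3).
Proof.
case: n => [|[|m]] // _.
  by rewrite (card_gen HP1 H0_1 H1_1 H2_1 H3_1 0).
rewrite (card_gen HP1 H0_1 H1_1 H2_1 H3_1 m.+1).
rewrite size6; last exact: (gen_tags HP1 H0_1 H1_1 H2_1 H3_1 m.+1 T1).
have [h0 [h1 [h2 [h3 [h4 h5]]]]] := counts1 m.
rewrite h0 h1 h3 h4 h5 (_ : m.+2.-1 = m.+1) //.
rewrite !binS ?bin1 ?bin0.
lia.
Qed.

Definition V2 (s : seq nat) k := forall u, 0 < u -> u < k -> subseq [:: 0; u; k] s.

Definition Inv2 (s : seq nat) (st : nat * nat) : Prop :=
 let: (t, k) := st in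
 match t with
 | 0 => allle s 0 /\ asc s = 0 /\ last 0 s = 0
 | 1 => allle s 1 /\ sorted2 s /\ (forall y, subseq [:: y; y] s -> y = 0) /\
        subseq [:: 0; 1] s /\ asc s = 1 /\ last 0 s = 1
 | 2 => allle s 1 /\ (subseq [:: 0; 1; 0] s \/ subseq [:: 0; 1; 1] s)
 | 3 => 2 <= k /\ allle s k /\ sorted2 s /\ (forall y, subseq [:: y; y] s -> y = 0) /\
        V2 s k /\ subseq [:: 0; k] s /\ asc s = k /\ last 0 s = k
 | 4 => 2 <= k /\ allle s k /\ sorted2 s /\ (forall y, subseq [:: y; y] s -> y = 0 \/ y = k) /\
        V2 s k /\ subseq [:: 0; k; k] s /\ asc s = k /\ last 0 s = k
 | 5 => 2 <= k /\ V2 s k /\ subseq [:: 0; 1; 0] s /\ asc s = k /\ last 0 s = 0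
 | _ => False
 end.

Definition succ2 (st : nat * nat) : seq (nat * (nat * nat)) :=
 let: (t, k) := st in
 match t with
 | 0 => [:: (0, (0, 0)); (1, (1, 1))]
 | 1 => [:: (0, (2, 0)); (1, (2, 0)); (2, (3, 2))]
 | 2 => [:: (0, (2, 0)); (1, (2, 0))]
 | 3 => [:: (0, (5, k)); (k, (4, k)); (k.+1, (3, k.+1))]
 | 4 => [:: (0, (5, k)); (k, (4, k))]
 | 5 => [:: (0, (5, k))]
 | _ => [::]
 end.

Lemma H1_2 s st : Inv2 s st -> valid P2 s -> forall v,
  valid P2 (rcons s v) <-> v \in map fst (succ2 st).
Proof.
case: st => t k hI hv v; rewrite valid2_rcons //.
case: t hI => [|[|[|[|[|[|t]]]]]] //=.
- move=> [hall [hasc hl]]; rewrite !inE; split; first lia.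
  move=> hv'; split; first lia.
  move=> a b c hs; pre hs; alls hall; unrel; lia.
- move=> [hall [hsort [hrep [h01 [hasc hl]]]]]; rewrite !inE; split; first lia.
  move=> hv'; split; first lia.
  move=> a b c hs; pre hs; alls hall; pairs hsort; have := rep_of hrep h23; unrel; lia.
- move=> [hall hw]; rewrite !inE; split.
    by move=> [_ hn]; case: hw => hw; have := hn _ _ _ hw; unrel; lia.
  move=> hv'; split; first lia.
  move=> a b c hs; pre hs; alls hall; unrel; lia.
- move=> [hk [hall [hsort [hrep [hV [h0k [hasc hl]]]]]]]; rewrite !inE; split.
    move=> [hv' hn]; case: (ltnP v k) => hvk; last lia.
    case: (posnP v) => hv0; first lia.
    by have := hn _ _ _ (hV v hv0 hvk); unrel; lia.
  move=> hv'; split; first lia.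
  move=> a b c hs; pre hs; alls hall; pairs hsort; have := rep_of hrep h23; unrel; lia.
- move=> [hk [hall [hsort [hrep [hV [hw [hasc hl]]]]]]]; rewrite !inE; split.
    move=> [hv' hn]; have := hn _ _ _ hw; case: (ltnP v k) => hvk; last (unrel; lia).
    case: (posnP v) => hv0; first lia.
    by have := hn _ _ _ (hV v hv0 hvk); unrel; lia.
  move=> hv'; split; first lia.
  move=> a b c hs; pre hs; alls hall; pairs hsort; have := rep_of hrep h23; unrel; lia.
- move=> [hk [hV [hw [hasc hl]]]]; rewrite !inE; split.
    move=> [hv' hn]; have := hn _ _ _ hw; case: (posnP v) => hv0; first lia.
    case: (ltnP v 2) => hv2; last (unrel; lia).
    by have := hn _ _ _ (hV v hv0 (leq_trans hv2 hk)); unrel; lia.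
  move=> hv'; split; first lia.
  move=> a b c hs; unrel; lia.
Qed.

Lemma H2_2 s st : Inv2 s st -> valid P2 s -> forall q, q \in succ2 st ->
  Inv2 (rcons s q.1) q.2.
Proof.
case: st => t k hI hv q; have sne := valid_nonnil hv; have z0 := zero_in hv.
case: t hI => [|[|[|[|[|[|t]]]]]] //=.
- move=> [hall [hasc hl]]; rewrite !inE => /orP [/eqP -> | /eqP ->] /=.
    split; first by allR hall.
    by rewrite last_rcons; split => //; ascR sne.
  split; first by allR hall.
  split; first by move=> x y /sub2R [h|[-> hx]]; [have := hall x (s2_1 h); have := hall y (s2_2 h) | have := hall x hx]; lia.
  split; first by move=> y /sub2R [h|[E hy]]; [have := hall y (s2_1 h) | have := hall y hy]; lia.
  split; first by apply/sub2R; right.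
  by rewrite last_rcons; split => //; ascR sne.
- move=> [hall [hsort [hrep [h01 [hasc hl]]]]]; rewrite !inE => /or3P [/eqP -> | /eqP -> | /eqP ->] /=.
  + split; first by allR hall.
    by left; apply/sub3R; right.
  + split; first by allR hall.
    by right; apply/sub3R; right.
  + split => //; split; first by allR hall.
    split; first by move=> x y /sub2R [h|[-> hx]]; [apply: hsort | have := hall x hx; lia].
    split; first by move=> y /sub2R [h|[E hy]]; [apply: hrep | have := hall y hy; lia].
    split. { move=> u hu1 hu2; apply/sub3R; right; split => //.
      by rewrite (_ : u = 1) //; lia. }
    split; first by apply/sub2R; right.
    by rewrite last_rcons; split => //; ascR sne.
- move=> [hall hw]; rewrite !inE => /orP [/eqP -> | /eqP ->] /=.
  + split; first by allR hall.
    by case: hw => hw; [left|right]; apply: sub_rcons.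
  + split; first by allR hall.
    by case: hw => hw; [left|right]; apply: sub_rcons.
- move=> [hk [hall [hsort [hrep [hV [h0k [hasc hl]]]]]]].
  rewrite !inE => /or3P [/eqP -> | /eqP -> | /eqP ->] /=.
  + split => //; split; first by move=> u hu1 hu2; apply: sub_rcons; apply: hV.
    split; first by apply/sub3R; right; split => //; apply: (@s3_12 _ _ k); apply: hV; lia.
    by rewrite last_rcons; split => //; ascR sne.
  + split => //; split; first by allR hall.
    split; first by move=> x y /sub2R [h|[-> hx]]; [apply: hsort | have := hall x hx; lia].
    split; first by move=> y /sub2R [h|[E hy]]; [left; apply: hrep | right].
    split; first by move=> u hu1 hu2; apply: sub_rcons; apply: hV.
    split; first by apply/sub3R; right.
    by rewrite last_rcons; split => //; ascR sne.
  + split; first lia.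
    split; first by allR hall.
    split; first by move=> x y /sub2R [h|[-> hx]]; [apply: hsort | have := hall x hx; lia].
    split; first by move=> y /sub2R [h|[E hy]]; [apply: hrep | have := hall y hy; lia].
    split. { move=> u hu1 hu2; apply/sub3R; right; split => //.
      case: (ltnP u k) => huk; first exact: (s3_12 (hV u hu1 huk)).
      by rewrite (_ : u = k) //; lia. }
    split; first by apply/sub2R; right.
    by rewrite last_rcons; split => //; ascR sne.
- move=> [hk [hall [hsort [hrep [hV [hw [hasc hl]]]]]]].
  rewrite !inE => /orP [/eqP -> | /eqP ->] /=.
  + split => //; split; first by move=> u hu1 hu2; apply: sub_rcons; apply: hV.
    split; first by apply/sub3R; right; split => //; apply: (@s3_12 _ _ k); apply: hV; lia.
    by rewrite last_rcons; split => //; ascR sne.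
  + split => //; split; first by allR hall.
    split; first by move=> x y /sub2R [h|[-> hx]]; [apply: hsort | have := hall x hx; lia].
    split; first by move=> y /sub2R [h|[E hy]]; [apply: hrep | right].
    split; first by move=> u hu1 hu2; apply: sub_rcons; apply: hV.
    split; first by apply: sub_rcons.
    by rewrite last_rcons; split => //; ascR sne.
- move=> [hk [hV [hw [hasc hl]]]].
  rewrite !inE => /eqP -> /=.
  split => //; split; first by move=> u hu1 hu2; apply: sub_rcons; apply: hV.
  split; first by apply: sub_rcons.
  by rewrite last_rcons; split => //; ascR sne.
Qed.

Lemma H3_2 s st : Inv2 s st -> valid P2 s -> uniq (map fst (succ2 st)).
Proof.
case: st => t k hI _; case: t hI => [|[|[|[|[|[|t]]]]]] //= hI; rewrite ?inE //; lia.
Qed.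

Lemma H0_2 : Inv2 [:: 0] (0, 0).
Proof. by split => // x; rewrite inE => /eqP ->. Qed.

Lemma HP2 : all (fun p => size p == 4) P2. Proof. by []. Qed.

Lemma T2 s t k : Inv2 s (t, k) -> t <= 5.
Proof. by case: t => [|[|[|[|[|[|t]]]]]]. Qed.

Lemma counts2 m :
  cnt 0 (gen succ2 m.+1) = 1 /\ cnt 1 (gen succ2 m.+1) = 1 /\
  cnt 2 (gen succ2 m.+1) + 2 = 2 ^ m.+1 /\ cnt 3 (gen succ2 m.+1) = m /\
  cnt 4 (gen succ2 m.+1) = 'C(m, 2) /\ cnt 5 (gen succ2 m.+1) = 'C(m.+1, 3).
Proof.
elim: m => [|m IH]; first by [].
move: IH => [h0 [h1 [h2 [h3 [h4 h5]]]]].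
rewrite (@cnt_step succ2 m.+1 0 (fun t => t == 0)); last by case => [[|[|[|[|[|[|t]]]]]] k].
rewrite (@cnt_step succ2 m.+1 1 (fun t => t == 0)); last by case => [[|[|[|[|[|[|t]]]]]] k].
rewrite (@cnt_step succ2 m.+1 2 (fun t => (t == 1) + (t == 1) + (t == 2) + (t == 2)));
  last by case => [[|[|[|[|[|[|t]]]]]] k].
rewrite (@cnt_step succ2 m.+1 3 (fun t => (t == 1) + (t == 3)));
  last by case => [[|[|[|[|[|[|t]]]]]] k].
rewrite (@cnt_step succ2 m.+1 4 (fun t => (t == 3) + (t == 4)));
  last by case => [[|[|[|[|[|[|t]]]]]] k].
rewrite (@cnt_step succ2 m.+1 5 (fun t => (t == 3) + (t == 4) + (t == 5)));
  last by case => [[|[|[|[|[|[|t]]]]]] k].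
rewrite !sumn_add !sumn_cnt h0 h1 h3 h4 h5.
rewrite !binS ?bin1 ?bin0 expnS.
lia.
Qed.

Lemma part2 n : 1 <= n -> a_P P2 n = 2 ^ n.-1 + 'C(n, 3).
Proof.
case: n => [|[|m]] // _.
  by rewrite (card_gen HP2 H0_2 H1_2 H2_2 H3_2 0).
rewrite (card_gen HP2 H0_2 H1_2 H2_2 H3_2 m.+1).
rewrite size6; last exact: (gen_tags HP2 H0_2 H1_2 H2_2 H3_2 m.+1 T2).
have [h0 [h1 [h2 [h3 [h4 h5]]]]] := counts2 m.
rewrite h0 h1 h3 h4 h5 (_ : m.+2.-1 = m.+1) //.
rewrite !binS ?bin1 ?bin0.
lia.
Qed.

Definition Inv3 (s : seq nat) (st : nat * nat) : Prop :=
 let: (t, k) := st in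
 match t with
 | 0 => allle s 0 /\ asc s = 0 /\ last 0 s = 0
 | 1 => allle s 1 /\ (forall y, subseq [:: y; y] s -> y = 0) /\ subseq [:: 0; 1] s /\ asc s = 1
 | 2 => allle s 1 /\ subseq [:: 0; 1; 1] s
 | 3 => 2 <= k /\ allle s k /\ (forall y, subseq [:: y; y] s -> y = 0) /\
        (forall u, 0 < u -> u <= k -> subseq [:: 0; u] s) /\ V2 s k /\ asc s = k /\ last 0 s = k
 | 4 => 2 <= k /\ allle s k /\ (forall y, subseq [:: y; y] s -> y = 0 \/ y = k) /\
        V2 s k /\ subseq [:: 0; k; k] s /\ asc s = k /\ last 0 s = k
 | _ => False
 end.

Definition succ3 (st : nat * nat) : seq (nat * (nat * nat)) :=
 let: (t, k) := st in
 match t with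
 | 0 => [:: (0, (0, 0)); (1, (1, 1))]
 | 1 => [:: (0, (1, 1)); (1, (2, 0)); (2, (3, 2))]
 | 2 => [:: (0, (2, 0)); (1, (2, 0))]
 | 3 => [:: (k, (4, k)); (k.+1, (3, k.+1))]
 | 4 => [:: (k, (4, k))]
 | _ => [::]
 end.

Lemma H1_3 s st : Inv3 s st -> valid P3 s -> forall v,
  valid P3 (rcons s v) <-> v \in map fst (succ3 st).
Proof.
case: st => t k hI hv v; rewrite valid3_rcons' //.
case: t hI => [|[|[|[|[|t]]]]] //=.
- move=> [hall [hasc hl]]; rewrite !inE; split; first lia.
  move=> hv'; split; first lia.
  move=> a b c hs; pre hs; alls hall; unrel; lia.
- move=> [hall [hrep [h01 hasc]]]; rewrite !inE; split; first lia.
  move=> hv'; split; first lia.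
  move=> a b c hs; pre hs; alls hall; have := rep_of hrep h23; unrel; lia.
- move=> [hall hw]; rewrite !inE; split.
    by move=> [_ hn]; have := hn _ _ _ hw; unrel; lia.
  move=> hv'; split; first lia.
  move=> a b c hs; pre hs; alls hall; unrel; lia.
- move=> [hk [hall [hrep [hV1 [hV [hasc hl]]]]]]; rewrite !inE; split.
    move=> [hv' hn]; case: (ltnP v k) => hvk; last lia.
    case: (posnP v) => hv0.
      by have := hn _ _ _ (hV 1 (ltn0Sn _) hk); unrel; lia.
    by have := hn _ _ _ (hV v hv0 hvk); unrel; lia.
  move=> hv'; split; first lia.
  move=> a b c hs; pre hs; alls hall; have := rep_of hrep h23; unrel; lia.
- move=> [hk [hall [hrep [hV [hw [hasc hl]]]]]]; rewrite !inE; split.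
    move=> [hv' hn]; have := hn _ _ _ hw; case: (ltnP v k) => hvk; last (unrel; lia).
    case: (posnP v) => hv0.
      by have := hn _ _ _ (hV 1 (ltn0Sn _) hk); unrel; lia.
    by have := hn _ _ _ (hV v hv0 hvk); unrel; lia.
  move=> hv'; split; first lia.
  move=> a b c hs; pre hs; alls hall; have := rep_of hrep h23; unrel; lia.
Qed.

Lemma H2_3 s st : Inv3 s st -> valid P3 s -> forall q, q \in succ3 st ->
  Inv3 (rcons s q.1) q.2.
Proof.
case: st => t k hI hv q; have sne := valid_nonnil hv; have z0 := zero_in hv.
have lin := last_in sne.
case: t hI => [|[|[|[|[|t]]]]] //=.
- move=> [hall [hasc hl]]; rewrite !inE => /orP [/eqP -> | /eqP ->] /=.
    split; first by allR hall.
    by rewrite last_rcons; split => //; ascR sne.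
  split; first by allR hall.
  split; first by move=> y /sub2R [h|[E hy]]; [have := hall y (s2_1 h) | have := hall y hy]; lia.
  split; first by apply/sub2R; right.
  by ascR sne.
- move=> [hall [hrep [h01 hasc]]]; rewrite !inE => /or3P [/eqP -> | /eqP -> | /eqP ->] /=.
  + split; first by allR hall.
    split; first by move=> y /sub2R [h|[E hy]]; [apply: hrep | lia].
    split; first by apply: sub_rcons.
    by ascR sne.
  + split; first by allR hall.
    by apply/sub3R; right.
  + have := hall _ lin => hl.
    split => //; split; first by allR hall.
    split; first by move=> y /sub2R [h|[E hy]]; [apply: hrep | have := hall y hy; lia].
    split. { move=> u hu1 hu2; apply/sub2R.
      have [->|->] : u = 1 \/ u = 2 by lia.
      by left. by right. }
    split. { move=> u hu1 hu2; apply/sub3R; right; split => //.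
      by rewrite (_ : u = 1) //; lia. }
    by rewrite last_rcons; split => //; ascR sne.
- move=> [hall hw]; rewrite !inE => /orP [/eqP -> | /eqP ->] /=.
  + by split; [allR hall | apply: sub_rcons].
  + by split; [allR hall | apply: sub_rcons].
- move=> [hk [hall [hrep [hV1 [hV [hasc hl]]]]]].
  rewrite !inE => /orP [/eqP -> | /eqP ->] /=.
  + split => //; split; first by allR hall.
    split; first by move=> y /sub2R [h|[E hy]]; [left; apply: hrep | right].
    split; first by move=> u hu1 hu2; apply: sub_rcons; apply: hV.
    split; first by apply/sub3R; right; split => //; apply: hV1; lia.
    by rewrite last_rcons; split => //; ascR sne.
  + split; first lia.
    split; first by allR hall.
    split; first by move=> y /sub2R [h|[E hy]]; [apply: hrep | have := hall y hy; lia].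
    split. { move=> u hu1 hu2; apply/sub2R.
      case: (leqP u k) => huk; first by left; apply: hV1.
      by right; split => //; lia. }
    split; first by move=> u hu1 hu2; apply/sub3R; right; split => //; apply: hV1; lia.
    by rewrite last_rcons; split => //; ascR sne.
- move=> [hk [hall [hrep [hV [hw [hasc hl]]]]]].
  rewrite !inE => /eqP -> /=.
  split => //; split; first by allR hall.
  split; first by move=> y /sub2R [h|[E hy]]; [apply: hrep | right].
  split; first by move=> u hu1 hu2; apply: sub_rcons; apply: hV.
  split; first by apply: sub_rcons.
  by rewrite last_rcons; split => //; ascR sne.
Qed.

Lemma H3_3 s st : Inv3 s st -> valid P3 s -> uniq (map fst (succ3 st)).
Proof.
case: st => t k hI _; case: t hI => [|[|[|[|[|t]]]]] //= hI; rewrite ?inE //; lia.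
Qed.

Lemma H0_3 : Inv3 [:: 0] (0, 0).
Proof. by split => // x; rewrite inE => /eqP ->. Qed.

Lemma HP3 : all (fun p => size p == 4) P3. Proof. by []. Qed.

Lemma T3 s t k : Inv3 s (t, k) -> t <= 5.
Proof. by case: t => [|[|[|[|[|[|t]]]]]]. Qed.

Lemma counts3 m :
  cnt 0 (gen succ3 m.+1) = 1 /\ cnt 1 (gen succ3 m.+1) = m.+1 /\
  cnt 2 (gen succ3 m.+1) + m + 2 = 2 ^ m.+1 /\ cnt 3 (gen succ3 m.+1) = 'C(m.+1, 2) /\
  cnt 4 (gen succ3 m.+1) = 'C(m.+1, 3) /\ cnt 5 (gen succ3 m.+1) = 0.
Proof.
elim: m => [|m IH]; first by [].
move: IH => [h0 [h1 [h2 [h3 [h4 h5]]]]].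
rewrite (@cnt_step succ3 m.+1 0 (fun t => t == 0)); last by case => [[|[|[|[|[|[|t]]]]]] k].
rewrite (@cnt_step succ3 m.+1 1 (fun t => (t == 0) + (t == 1))); last by case => [[|[|[|[|[|[|t]]]]]] k].
rewrite (@cnt_step succ3 m.+1 2 (fun t => (t == 1) + (t == 2) + (t == 2)));
  last by case => [[|[|[|[|[|[|t]]]]]] k].
rewrite (@cnt_step succ3 m.+1 3 (fun t => (t == 1) + (t == 3)));
  last by case => [[|[|[|[|[|[|t]]]]]] k].
rewrite (@cnt_step succ3 m.+1 4 (fun t => (t == 3) + (t == 4)));
  last by case => [[|[|[|[|[|[|t]]]]]] k].
rewrite (@cnt_step succ3 m.+1 5 (fun t => 0));
  last by case => [[|[|[|[|[|[|t]]]]]] k].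
rewrite !sumn_add !sumn_cnt h0 h1 h3 h4.
have -> : sumn [seq 0 | _ <- gen succ3 m.+1] = 0 by elim: (gen succ3 m.+1).
rewrite !binS ?bin1 ?bin0 expnS.
lia.
Qed.

Lemma part3 n : 1 <= n -> a_P P3 n = 2 ^ n.-1 + 'C(n, 3).
Proof.
case: n => [|[|m]] // _.
  by rewrite (card_gen HP3 H0_3 H1_3 H2_3 H3_3 0).
rewrite (card_gen HP3 H0_3 H1_3 H2_3 H3_3 m.+1).
rewrite size6; last exact: (gen_tags HP3 H0_3 H1_3 H2_3 H3_3 m.+1 T3).
have [h0 [h1 [h2 [h3 [h4 h5]]]]] := counts3 m.
rewrite h0 h1 h3 h4 h5 (_ : m.+2.-1 = m.+1) //.
rewrite !binS ?bin1 ?bin0.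
lia.
Qed.

Theorem theorem4p2 (n : nat) : 1 <= n ->
  a_P [:: [:: 0; 1; 0; 2]; [:: 0; 1; 1; 2]; [:: 0; 1; 2; 0]] n = 2 ^ n.-1 + 'C(n, 3) /\
  a_P [:: [:: 0; 1; 0; 2]; [:: 0; 1; 1; 2]; [:: 0; 1; 2; 1]] n = 2 ^ n.-1 + 'C(n, 3) /\
  a_P [:: [:: 0; 1; 1; 2]; [:: 0; 1; 2; 0]; [:: 0; 1; 2; 1]] n = 2 ^ n.-1 + 'C(n, 3).
Proof.
move=> hn; split; first exact: (part1 hn).
split; first exact: (part2 hn).
exact: (part3 hn).
Qed.
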